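(* Let $(A,C,k)$ be an instance with $n$ voters, let $t>0$, and let $W$ be an affordable committee with $|N_c|\le t\frac{n}{k}$ for every $c\in C\setminus W$. Then the utilitarian ratio of $W$ is at least $\min\left(\frac12,\frac{|W|}{2tk}\right)$.
   Context: An instance $(A,C,k)$ consists of a finite nonempty candidate set $C$, voters $N=\{1,\dots,n\}$, approval sets $A_i\subseteq C$, and a committee size $1\le k\le |C|$. $N_c=\{i\in N: c\in A_i\}$. A committee is a set $W\subseteq C$ with $|W|\le k$. $\mathrm{sw}(W)=\sum_{i\in N}|A_i\cap W|$; the utilitarian ratio of $W$ is $\mathrm{sw}(W)/\max\{\mathrm{sw}(W'): |W'|=k\}$. A committee $W$ is affordable if there are functions $p_i:C\to\mathbb{R}_{\ge0}$ ($i\in N$) with: $p_i(c)=0$ whenever $c\notin A_i$; $\sum_{c}p_i(c)\le k/n$ for all $i$; $\sum_i p_i(c)=1$ for all $c\in W$; $\sum_i p_i(c)=0$ for all $c\notin W$. *)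

(* Defs.v *)
From mathcomp Require Import all_boot all_order all_algebra.
Set Implicit Arguments. Unset Strict Implicit. Unset Printing Implicit Defensive.
Import Order.TTheory GRing.Theory Num.Theory.
Local Open Scope ring_scope.

Definition supporters (Cd : finType) (n : nat) (A : 'I_n -> {set Cd}) (c : Cd)
  : {set 'I_n} := [set i | c \in A i].

Definition sw (Cd : finType) (n : nat) (A : 'I_n -> {set Cd}) (W : {set Cd}) : nat :=
  (\sum_(i < n) #|A i :&: W|)%N.

Definition max_sw (Cd : finType) (n : nat) (A : 'I_n -> {set Cd}) (k : nat) : nat :=
  (\max_(W' : {set Cd} | #|W'| == k) sw A W')%N.

Definition util_ratio (R : realFieldType) (Cd : finType) (n : nat)
  (A : 'I_n -> {set Cd}) (k : nat) (W : {set Cd}) : R :=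
  (sw A W)%:R / (max_sw A k)%:R.

(* W is affordable (|W| <= k is part of being a committee) *)
Definition affordable (R : realFieldType) (Cd : finType) (n : nat)
  (A : 'I_n -> {set Cd}) (k : nat) (W : {set Cd}) : Prop :=
  (#|W| <= k)%N /\
  exists p : 'I_n -> Cd -> R,
    [/\ (forall i c, 0 <= p i c),
        (forall i c, c \notin A i -> p i c = 0),
        (forall i, \sum_(c : Cd) p i c <= k%:R / n%:R),
        (forall c, c \in W -> \sum_(i < n) p i c = 1) &
        (forall c, c \notin W -> \sum_(i < n) p i c = 0)].

(* Main.v *)
Require Import Defs.
From mathcomp Require Import all_boot all_order all_algebra.
From mathcomp Require Import ring lra zify.
Import Order.TTheory GRing.Theory Num.Theory.
Local Open Scope ring_scope.

Lemma swE (Cd : finType) n (A : 'I_n -> {set Cd}) (X : {set Cd}) :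
  sw A X = (\sum_(c in X) #|supporters A c|)%N.
Proof.
rewrite /sw (eq_bigr (fun i => \sum_(c in X) (c \in A i) : nat)%N); last first.
  move=> i _; rewrite -sum1_card big_mkcond /= [RHS]big_mkcond /=.
  by apply: eq_bigr => c _; rewrite inE; case: (c \in A i); case: (c \in X).
rewrite exchange_big /=; apply: eq_bigr => c _.
rewrite -sum1_card [RHS]big_mkcond /=; apply: eq_bigr => i _; rewrite inE.
by case: (c \in A i).
Qed.

Lemma sw_mono (Cd : finType) n (A : 'I_n -> {set Cd}) (X Y : {set Cd}) :
  X \subset Y -> (sw A X <= sw A Y)%N.
Proof.
move=> sXY; rewrite /sw; apply: leq_sum => i _.
by apply: subset_leq_card; apply: setIS.
Qed.

Lemma extend_set (Cd : finType) (X : {set Cd}) m :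
  (#|X| <= m)%N -> (m <= #|Cd|)%N -> exists Y : {set Cd}, X \subset Y /\ #|Y| = m.
Proof.
move=> h1 h2.
have : (m - #|X| <= #|~: X|)%N by have := cardsC X; lia.
case/card_geqP => s [us ss sub].
exists (X :|: [set x in s]); split; first exact: subsetUl.
rewrite cardsU cardsE (card_uniqP us) ss.
have -> : X :&: [set x in s] = set0.
  apply/setP => x; rewrite !inE; apply/negbTE/negP => /andP[xX xs].
  by have := sub x xs; rewrite inE xX.
by rewrite cards0; lia.
Qed.

Lemma aff_bound (R : realFieldType) (Cd : finType) (n : nat)
  (A : 'I_n -> {set Cd}) (k : nat) (W : {set Cd}) :
  (0 < n)%N -> affordable R A k W ->
  (#|W|)%:R * n%:R <= (sw A W)%:R * k%:R :> R.
Proof.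
move=> Hn [_ [p [p0 pA psum pW pnW]]].
have nz : n%:R != 0 :> R by rewrite pnatr_eq0 -lt0n.
have e : (#|W|)%:R = \sum_(c in W) \sum_(i < n) p i c :> R.
  by rewrite -sum1_card natr_sum; apply: eq_bigr => c cW; rewrite pW.
have kn0 : 0 <= k%:R / n%:R :> R by rewrite divr_ge0 ?ler0n.
have hi : forall i, \sum_(c in W) p i c <= (#|A i :&: W|)%:R * (k%:R / n%:R).
  move=> i; case: (posnP #|A i :&: W|) => h.
    rewrite h mul0r big1 // => c cW; apply: pA; apply/negP => ci.
    move/eqP: h; rewrite cards_eq0 => /eqP h0.
    have : c \in A i :&: W by rewrite inE ci cW.
    by rewrite h0 inE.
  apply: (le_trans (y := \sum_c p i c)).
    rewrite [X in X <= _]big_mkcond; apply: ler_sum => c _.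
    by case: ifP => // _; rewrite lexx.
  apply: le_trans (psum i) _; rewrite ler_peMl // ler1n //.
have H : (#|W|)%:R <= (sw A W)%:R * (k%:R / n%:R) :> R.
  rewrite e exchange_big /= /sw natr_sum mulr_suml; apply: ler_sum => i _.
  exact: hi.
have := ler_wpM2r (ler0n R n) H.
by rewrite -mulrA mulfVK.
Qed.

Lemma upper (R : realFieldType) (Cd : finType) (n : nat)
  (A : 'I_n -> {set Cd}) (k : nat) (t : R) (W W' : {set Cd}) :
  (0 < k)%N -> 0 < t -> #|W'| = k ->
  (forall c, c \notin W -> (#|supporters A c|)%:R <= t * (n%:R / k%:R)) ->
  (sw A W')%:R <= (sw A W)%:R + t * n%:R.
Proof.
move=> Hk Ht HW' Hsmall.
have nz : k%:R != 0 :> R by rewrite pnatr_eq0 -lt0n.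
rewrite !swE !natr_sum (bigID (fun c => c \in W)) /=.
apply: lerD.
  rewrite [X in X <= _]big_mkcond [X in _ <= X]big_mkcond /=.
  apply: ler_sum => c _.
  by case: (c \in W'); case: (c \in W); rewrite /= ?lexx ?ler0n.
have tnk : 0 <= t * (n%:R / k%:R) by rewrite mulr_ge0 ?divr_ge0 ?ler0n // ltW.
apply: (le_trans (y := \sum_(c in W') t * (n%:R / k%:R))).
  rewrite [X in X <= _]big_mkcond [X in _ <= X]big_mkcond /=.
  apply: ler_sum => c _.
  case: (c \in W'); case: (boolP (c \in W)) => cW //=; rewrite ?lexx //.
  exact: Hsmall.
by rewrite sumr_const HW' -[_ *+ k]mulr_natr -mulrA mulfVK.
Qed.

Theorem lemma2 (R : realFieldType) (Cd : finType) (n : nat)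
  (A : 'I_n -> {set Cd}) (k : nat) (t : R)
  (Hne : (0 < #|Cd|)%N) (Hn : (0 < n)%N) (Hk1 : (1 <= k)%N) (HkC : (k <= #|Cd|)%N)
  (Ht : 0 < t) (W : {set Cd})
  (HW : affordable R A k W)
  (Hsmall : forall c, c \notin W -> (#|supporters A c|)%:R <= t * (n%:R / k%:R)) :
  Num.min (1 / 2) ((#|W|)%:R / (2 * t * k%:R)) <= util_ratio R A k W.
Proof.
have Wk : (#|W| <= k)%N by case: HW.
have [W0 [sW0 W0k]] := @extend_set _ W k Wk HkC.
have cardpos : (0 < #|(fun W' : {set Cd} => #|W'| == k)|)%N.
  by apply/card_gt0P; exists W0; rewrite /in_mem /= W0k.
have [Wm Wmk eqM] := @eq_bigmax_cond _ (fun W' : {set Cd} => #|W'| == k) (sw A) cardpos.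
have hMs : (max_sw A k)%:R <= (sw A W)%:R + t * n%:R :> R.
  rewrite /max_sw eqM; apply: (@upper R Cd n A k t W Wm Hk1 Ht _ Hsmall); exact/eqP.
have hsM : (sw A W <= max_sw A k)%N.
  apply: leq_trans (@sw_mono Cd n A W W0 sW0) _.
  rewrite /max_sw; apply: (@leq_bigmax_cond _ (fun W' : {set Cd} => #|W'| == k) (sw A) W0); by rewrite W0k.
have hW := @aff_bound R Cd n A k W Hn HW.
rewrite /util_ratio.
have hsR : (sw A W)%:R <= (max_sw A k)%:R :> R by rewrite ler_nat.
move: hMs hW hsR.
set s := (sw A W)%:R; set M := (max_sw A k)%:R; set w := (#|W|)%:R.
have s0 : 0 <= s by rewrite ler0n.
have w0 : 0 <= w by rewrite ler0n.
have n0 : 0 < n%:R :> R by rewrite ltr0n.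
have k0 : 1 <= k%:R :> R by rewrite ler1n.
clear hsM; move=> hMs hW hsM.
rewrite ge_min; apply/orP.
have [M0|Mpos] := eqVneq M 0.
  right.
  have s00 : s = 0 by apply/le_anti; rewrite s0 -M0 hsM.
  have w00 : w = 0.
    apply/le_anti; rewrite w0 andbT.
    move: hW; rewrite s00 mul0r => hW.
    nra.
  by rewrite w00 s00 !mul0r.
have Mp : 0 < M by rewrite lt_def Mpos (le_trans s0 hsM).
have [hT|hT] := leP (t * n%:R) s.
  by left; rewrite ler_pdivlMr //; lra.
right.
have tk : 0 < 2 * t * k%:R by rewrite !mulr_gt0 // (lt_le_trans ltr01 k0).
rewrite ler_pdivrMr // mulrAC ler_pdivlMr //.
have h1 : w * M <= w * (2 * t * n%:R) by rewrite ler_wpM2l //; lra.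
have h2 : w * (2 * t * n%:R) = 2 * t * (w * n%:R) by ring.
have h3 : 2 * t * (w * n%:R) <= 2 * t * (s * k%:R).
  by rewrite ler_wpM2l // mulr_ge0 // ltW.
apply: (le_trans h1); rewrite h2; apply: (le_trans h3); rewrite le_eqVlt; apply/orP; left; apply/eqP; ring.
Qed.
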